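(* Let $\mathcal F=(A,X,f)$ be a fuzzy automaton. A word $w\in X^*$ D3-merges two states $a,b\in A$ in $\mathcal F$ if and only if it D3-merges them in the associated NFA $\hat{\mathcal F}$. Consequently, a complete fuzzy automaton is D3-directable if and only if every pair of its states is D3-merged by some word.
   Context: A fuzzy automaton is a triple $\mathcal F=(A,X,f)$ with $A$ a finite nonempty set of states, $X$ a finite nonempty alphabet, and $f:A\times X\times A\to[0,1]$, extended to words by $f^*(a,\varepsilon,a)=1$, $f^*(a,\varepsilon,b)=0$ ($b\neq a$), $f^*(a,vx,b)=\max_{c\in A}\min\{f^*(a,v,c),f(c,x,b)\}$. Let $\mathcal F(a,w)=\{b\in A\mid f^*(a,w,b)>0\}$. $\mathcal F$ is complete if $\mathcal F(a,x)\neq\emptyset$ for all $a\in A$, $x\in X$. A word $w$ D3-merges $a,b$ in $\mathcal F$ if $\mathcal F(a,w)\cap\mathcal F(b,w)\ne\emptyset$. $\mathcal F$ is D3-directable if some $w\in X^*$ and $c\in A$ satisfy $c\in\mathcal F(a,w)$ for all $a\in A$. An NFA $\mathcal N=(A,X)$ assigns to each $x\in X$ a relation $x^{\mathcal N}\subseteq A\times A$, extended to words by $H\varepsilon^{\mathcal N}=H$, $Hx^{\mathcal N}=\bigcup_{a\in H}\{b\mid(a,b)\in x^{\mathcal N}\}$, $H(vx)^{\mathcal N}=(Hv^{\mathcal N})x^{\mathcal N}$, $aw^{\mathcal N}=\{a\}w^{\mathcal N}$; $w$ D3-merges $a,b$ in $\mathcal N$ if $aw^{\mathcal N}\cap bw^{\mathcal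 N}\neq\emptyset$. The associated NFA of $\mathcal F$ is $\hat{\mathcal F}=(A,X)$ with $ax^{\hat{\mathcal F}}=\{b\in A\mid f(a,x,b)>0\}$. *)

(* Defs.v *)
From HB Require Import structures.
From mathcomp Require Import all_boot all_order all_algebra.
From mathcomp Require Import reals.
Set Implicit Arguments. Unset Strict Implicit. Unset Printing Implicit Defensive.
Import Order.TTheory GRing.Theory Num.Theory.
Local Open Scope ring_scope.

Section Fuzzy.
Variables (R : realType) (A X : finType).

Definition fuzzy_trans := A -> X -> A -> R.

Definition fuzzy_valued (f : fuzzy_trans) : Prop :=
  forall a x b, 0 <= f a x b <= 1.

(* f^* on a reversed word: f^*(a, v x, b) = max_c min (f^*(a,v,c)) (f(c,x,b)).
   The max is taken with base 0; all values are >= 0 so this is the max over A. *)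
Fixpoint fstar_rev (f : fuzzy_trans) (a : A) (rw : seq X) (b : A) : R :=
  match rw with
  | [::] => if a == b then 1 else 0
  | x :: rv => \big[Num.max/0]_(c : A) Num.min (fstar_rev f a rv c) (f c x b)
  end.

Definition fstar (f : fuzzy_trans) (a : A) (w : seq X) (b : A) : R :=
  fstar_rev f a (rev w) b.

Definition Freach (f : fuzzy_trans) (a : A) (w : seq X) : {set A} :=
  [set b | 0 < fstar f a w b].

Definition fuzzy_complete (f : fuzzy_trans) : Prop :=
  forall a x, Freach f a [:: x] != set0.

Definition D3merges_F (f : fuzzy_trans) (w : seq X) (a b : A) : Prop :=
  Freach f a w :&: Freach f b w != set0.

Definition D3directable_F (f : fuzzy_trans) : Prop :=
  exists w : seq X, exists c : A, forall a : A, c \in Freach f a w.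

Definition nfa := X -> rel A.

Definition nfa_step (N : nfa) (H : {set A}) (x : X) : {set A} :=
  [set b | [exists a in H, N x a b]].

Definition nfa_word (N : nfa) (H : {set A}) (w : seq X) : {set A} :=
  foldl (nfa_step N) H w.

Definition D3merges_N (N : nfa) (w : seq X) (a b : A) : Prop :=
  nfa_word N [set a] w :&: nfa_word N [set b] w != set0.

Definition assoc_nfa (f : fuzzy_trans) : nfa := fun x a b => 0 < f a x b.

End Fuzzy.

(* Main.v *)
Require Import Defs.
From HB Require Import structures.
From mathcomp Require Import all_boot all_order all_algebra.
From mathcomp Require Import reals.
Import Order.TTheory GRing.Theory Num.Theory.
Local Open Scope ring_scope.

Section Aux.
Variables (R : realType) (A X : finType).

Lemma bigmax_pos (F : A -> R) :
  (0 < \big[Num.max/0]_(c : A) F c) = [exists c, 0 < F c].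
Proof.
apply/idP/idP.
- apply: contraLR => /existsPn H.
  have H' : forall c, F c <= 0 by move=> c; rewrite leNgt H.
  rewrite -leNgt; apply: (big_ind (fun y => y <= 0)) => //.
  by move=> x y hx hy; rewrite ge_max hx hy.
- case/existsP=> c Hc; rewrite (bigD1 c) //= lt_max Hc //.
Qed.

Variable f : fuzzy_trans R A X.
Let N := assoc_nfa f.

Lemma nfa_word_rcons (H : {set A}) w x :
  nfa_word N H (rcons w x) = nfa_step N (nfa_word N H w) x.
Proof. by rewrite /nfa_word -cats1 foldl_cat. Qed.

Lemma key rw a b :
  (0 < fstar_rev f a rw b) = (b \in nfa_word N [set a] (rev rw)).
Proof.
elim: rw b => [|x rv IH] b /=.
  rewrite in_set1 eq_sym; case: eqP => _; by rewrite ?ltr01 ?ltxx.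
rewrite rev_cons nfa_word_rcons /nfa_step inE bigmax_pos.
by apply: eq_existsb => c; rewrite lt_min IH.
Qed.

Lemma Freach_eq a w : Freach f a w = nfa_word N [set a] w.
Proof. by apply/setP => b; rewrite inE /fstar key revK. Qed.

Lemma nfa_word_sub (H K : {set A}) w : H \subset K -> nfa_word N H w \subset nfa_word N K w.
Proof.
elim: w H K => [|x w IH] H K HK //=.
apply: IH; apply/subsetP => b; rewrite !inE => /existsP [c /andP [cH cb]].
by apply/existsP; exists c; rewrite cb (subsetP HK).
Qed.

Lemma nfa_word_trans a b e w v :
  b \in nfa_word N [set a] w -> e \in nfa_word N [set b] v ->
  e \in nfa_word N [set a] (w ++ v).
Proof.
move=> hb he; rewrite /nfa_word foldl_cat.
have : [set b] \subset nfa_word N [set a] w by rewrite sub1set.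
by move/(@nfa_word_sub _ _ v)/subsetP; apply.
Qed.

End Aux.

Theorem lemma5p2 (R : realType) (A X : finType) (f : fuzzy_trans R A X)
    (hA : (0 < #|A|)%N) (hX : (0 < #|X|)%N) (hf : fuzzy_valued f) :
  (forall (w : seq X) (a b : A), D3merges_F f w a b <-> D3merges_N (assoc_nfa f) w a b)
  /\ (fuzzy_complete f ->
      (D3directable_F f <-> forall a b : A, exists w : seq X, D3merges_F f w a b)).
Proof.
split.
  by move=> w a b; rewrite /D3merges_F /D3merges_N !Freach_eq.
move=> hc; split.
  case=> w [c H] a b; exists w; apply/set0Pn; exists c.
  by rewrite inE !H.
move=> hm.
have nonempty : forall a w, exists b, b \in nfa_word (assoc_nfa f) [set a] w.
  move=> a w; elim/last_ind: w => [|w x [b hb]].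
    by exists a; rewrite /= set11.
  have := hc b x; rewrite Freach_eq => /set0Pn [e he].
  exists e; rewrite nfa_word_rcons.
  have : [set b] \subset nfa_word (assoc_nfa f) [set a] w by rewrite sub1set.
  by move/(@nfa_word_sub _ _ _ f _ _ [:: x])/subsetP; apply.
have main : forall s : seq A, exists w, exists c, forall a, a \in s ->
    c \in nfa_word (assoc_nfa f) [set a] w.
  elim=> [|d s [w [c H]]].
    case/card_gt0P: hA => c0 _; by exists [::], c0.
  have [d' hd'] := nonempty d w.
  have [v] := hm c d'.
  rewrite /D3merges_F !Freach_eq => /set0Pn [e]; rewrite inE => /andP [e1 e2].
  exists (w ++ v), e => a; rewrite inE => /orP [/eqP -> | ha].
    exact: nfa_word_trans hd' e2.
  exact: nfa_word_trans (H a ha) e1.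
have [w [c H]] := main (enum A).
exists w, c => a; rewrite Freach_eq; apply: H.
exact: mem_enum.
Qed.
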